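(* For integers $N\ge 0$ and $i\ge 0$, the number of reversed partial ternary paths of length $3N+2i$ ending at level $i$ equals $$\sum_{0\le k\le i/2}\binom{i-k}{k}\left[\binom{3N+2i+1}{N+k}-3\binom{3N+2i}{N+k-1}\right],$$ with the convention $\binom{a}{b}=0$ for $b<0$.
   Context: A reversed partial ternary path of length $n$ is a lattice path $(0,c_0),\dots,(n,c_n)$ with $c_0=0$, each step being either $(1,2)$ or $(1,-1)$, never going below the $x$-axis; it ends at level $c_n$. Equivalently, these are final segments of ternary paths (steps $(1,1)$ and $(1,-2)$, staying weakly above the $x$-axis, ending on the $x$-axis) read from right to left. *)

(* Defs.v *)
From mathcomp Require Import all_boot all_order all_algebra.
Set Implicit Arguments. Unset Strict Implicit. Unset Printing Implicit Defensive.
Import GRing.Theory Num.Theory.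

(* A path of length n with steps (1,2) (encoded true) and (1,-1) (encoded false),
   starting at (0,0). *)
Definition step_val (b : bool) : int := if b then Posz 2 else (-1)%R.

Definition level (s : seq bool) (m : nat) : int :=
  (\sum_(b <- take m s) step_val b)%R.

Definition nonneg_path (s : seq bool) : bool :=
  [forall m : 'I_(size s).+1, (0 <= level s m)%R].

Definition num_rpt (n i : nat) : nat :=
  #|[set t : n.-tuple bool | nonneg_path t && (level t n == Posz i)]|.

(* Main.v *)
Require Import Defs.
From mathcomp Require Import all_boot all_order all_algebra.
From mathcomp Require Import zify ring.
Import GRing.Theory Num.Theory.
Set Implicit Arguments. Unset Strict Implicit. Unset Printing Implicit Defensive.

Definition Cz (a : nat) (m : int) : int :=
  match m with Posz k => Posz 'C(a, k) | Negz _ => 0%R end.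

Lemma Cz_neg a m : (m < 0)%R -> Cz a m = 0%R.
Proof. by case: m. Qed.

Lemma CzS a m : Cz a.+1 m = (Cz a m + Cz a (m - 1))%R.
Proof.
case: m => [[|k]|k].
- have -> : (Posz 0 - 1 = Negz 0)%R by [].
  by rewrite /= addr0 !bin0.
- have -> : (Posz k.+1 - 1 = Posz k)%R by lia.
  by rewrite /= binS PoszD addrC.
- rewrite !Cz_neg ?addr0 //; lia.
Qed.

Definition Af (n : nat) (m : int) : int := (Cz n.+1 m - 3 * Cz n (m - 1))%R.

Lemma AfS n m : Af n.+1 m = (Af n m + Af n (m - 1))%R.
Proof. rewrite /Af CzS (CzS n (m - 1)); ring. Qed.

Definition H (n j : nat) (m : int) : int :=
  (\sum_(0 <= k < j.+1) Posz 'C(j - k, k) * Af n (m + Posz k))%R.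

Lemma H0 n m : H n 0 m = Af n m.
Proof. by rewrite /H big_nat1 bin0 mul1r addr0. Qed.

Lemma H1 n m : H n 1 m = Af n m.
Proof. by rewrite /H big_nat_recr //= big_nat1 bin0 mul1r addr0 mul0r addr0. Qed.

Lemma binP j k : 'C(j.+1 - k, k.+1) = 'C(j - k, k) + 'C(j - k, k.+1).
Proof.
case: (ltnP j k) => h.
- have e1 : j.+1 - k = 0 by lia.
  have e2 : j - k = 0 by lia.
  by rewrite e1 e2 !bin0n; case: k h {e1 e2}.
- by rewrite subSn // binS addnC.
Qed.

Lemma Hrecl n j m : H n j.+1 m =
  (Af n m + \sum_(0 <= k < j.+1) Posz 'C(j - k, k.+1) * Af n (m + 1 + Posz k))%R.
Proof.
rewrite /H big_nat_recl // subn0 bin0 mul1r addr0; congr (_ + _)%R.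
apply: eq_bigr => k _; rewrite subSS; congr (_ * Af n _)%R; lia.
Qed.

Lemma Hrec n j m : H n j.+2 m = (H n j.+1 m + H n j (m + 1))%R.
Proof.
rewrite Hrecl (Hrecl n j); move: (Af n m) => a; rewrite -addrA; congr (_ + _)%R.
rewrite /H [in LHS]big_nat_recr //= subnn bin0n mul0r addr0 -big_split /=.
apply: eq_bigr => k _; rewrite binP.
by rewrite PoszD mulrDl addrC.
Qed.

Lemma HS n j m : H n.+1 j m = (H n j m + H n j (m - 1))%R.
Proof.
rewrite /H -big_split; apply: eq_bigr => k _ /=; rewrite AfS -mulrDr.
congr (_ * (_ + Af n _))%R; lia.
Qed.

Lemma Af_zero M : Af (3 * M + 2) (Posz M.+1) = 0%R.
Proof.
rewrite /Af.
have -> : (Posz M.+1 - 1 = Posz M)%R by lia.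
have e : 'C((3 * M + 2).+1, M.+1) = 3 * 'C(3 * M + 2, M).
  apply/eqP; rewrite -(eqn_pmul2l (ltn0Sn M)) -mul_bin_diag.
  have -> : (3 * M + 2).+1 = 3 * M.+1 by lia.
  have -> : (3 * M.+1).-1 = 3 * M + 2 by lia.
  by rewrite (mulnC 3) -mulnA.
by rewrite /= e PoszM subrr.
Qed.

Definition cnt n (z : int) : nat :=
  #|[set t : n.-tuple bool | nonneg_path t && (level t n == z)]|.

Lemma card_sum (T : finType) (P : pred T) : #|[set x | P x]| = \sum_x (P x : nat).
Proof.
rewrite -sum1_card big_mkcond; apply: eq_bigr => x _; rewrite inE.
by case: (P x).
Qed.

Lemma level_rcons_le (s : seq bool) b m : m <= size s -> level (rcons s b) m = level s m.
Proof. by move=> h; rewrite /level -cats1 takel_cat. Qed.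

Lemma level_rcons (s : seq bool) b :
  level (rcons s b) (size s).+1 = (level s (size s) + step_val b)%R.
Proof.
rewrite /level take_oversize ?size_rcons // take_size -cats1 big_cat /=.
by rewrite big_seq1.
Qed.

Lemma nonneg_last s : nonneg_path s -> (0 <= level s (size s))%R.
Proof. by move/forallP/(_ ord_max). Qed.

Lemma nonneg_rcons (s : seq bool) b :
  nonneg_path (rcons s b) = nonneg_path s && (0 <= level s (size s) + step_val b)%R.
Proof.
apply/idP/idP.
- move/forallP => H; apply/andP; split.
  + apply/forallP => m.
    have := H (inord m); rewrite inordK; last first.
      by rewrite size_rcons; have := ltn_ord m; lia.
    rewrite level_rcons_le //; have := ltn_ord m; lia.
  + by have := H (inord (size s).+1); rewrite inordK ?size_rcons // level_rcons.
- case/andP => /forallP H1 H2; apply/forallP => m.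
  case: (leqP m (size s)) => hm.
  + rewrite level_rcons_le //; have := H1 (inord m); rewrite inordK //.
  + have -> : nat_of_ord m = (size s).+1.
      by have := ltn_ord m; have := size_rcons s b; lia.
    by rewrite level_rcons.
Qed.

Lemma cnt_neg n z : (z < 0)%R -> cnt n z = 0.
Proof.
move=> hz; rewrite /cnt card_sum big1 // => t _.
case h: (nonneg_path t) => //=.
have := nonneg_last h; rewrite size_tuple => h2.
case: eqP => // e; move: h2; rewrite e; lia.
Qed.

Lemma nonneg_nil : nonneg_path [::].
Proof. by apply/forallP => m; rewrite /level /= big_nil. Qed.

Lemma cnt0 z : cnt 0 z = (z == 0%R).
Proof.
rewrite /cnt card_sum.
rewrite (eq_bigr (fun=> (nonneg_path ([tuple] : 0.-tuple bool) && (level [::] 0 == z) : nat)));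
  last by move=> t _; rewrite tuple0.
rewrite sum_nat_const card_tuple /= mul1n nonneg_nil /level /= big_nil.
by rewrite eq_sym.
Qed.

Lemma tuple_rcons n (u : n.+1.-tuple bool) :
  val u = rcons (belast (thead u) (behead u)) (last (thead u) (behead u)).
Proof. by rewrite -lastI {1}(tuple_eta u). Qed.

Lemma level_rcons_n (s : seq bool) b n : size s = n ->
  level (rcons s b) n.+1 = (level s n + step_val b)%R.
Proof. by move<-; apply: level_rcons. Qed.

Lemma cnt_rec n z : (0 <= z)%R -> cnt n.+1 z = cnt n (z - 2) + cnt n (z + 1).
Proof.
move=> hz; rewrite /cnt !card_sum.
pose h := fun p : n.-tuple bool * bool => [tuple of rcons p.1 p.2].
pose g := fun u : n.+1.-tuple bool =>
  (([tuple of belast (thead u) (behead u)] : n.-tuple bool), last (thead u) (behead u)).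
rewrite (reindex h); last first.
  apply: onW_bij; exists g.
  - move=> [t b]; rewrite /g /h.
    have := tuple_rcons [tuple of rcons t b] => /= /rcons_inj [e1 e2].
    by congr (_, _); [apply: val_inj; rewrite /= -e1 | rewrite -e2].
  - by move=> u; apply: val_inj; rewrite /= -tuple_rcons.
rewrite -(pair_big xpredT xpredT (fun t b => (nonneg_path (h (t, b)) && (level (h (t, b)) n.+1 == z) : nat))) /=.
under eq_bigr => t _ do rewrite big_bool.
rewrite big_split /=; congr (_ + _); apply: eq_bigr => t _;
  rewrite nonneg_rcons level_rcons_n ?size_tuple //= ?size_tuple;
  case hn: (nonneg_path t) => //=;
  have := nonneg_last hn; rewrite size_tuple => hL.
- have -> : (0 <= level t n + Posz 2)%R by lia.
  by congr (nat_of_bool _); apply/eqP/eqP; lia.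
- have -> : ((level t n + -1 == z) = (level t n == z + 1))%R by apply/eqP/eqP; lia.
  case: (level t n =P z + 1)%R => e /=; last by rewrite andbF.
  have -> : (0 <= level t n + -1)%R by lia.
  done.
Qed.

Lemma main_gen n : forall j (N : int), (3 * N + Posz (2 * j) = Posz n)%R ->
  Posz (cnt n (Posz j)) = H n j N.
Proof.
elim: n => [|n IH] j N hN.
- rewrite cnt0; case: j hN => [|j] hN.
  + have -> : N = 0%R by lia.
    by rewrite H0 /Af (Cz_neg _ (m := (0 - 1)%R)).
  + rewrite /= /H big_nat big1 // => k /andP [_ hk].
    case: (ltnP j.+1 (2 * k)) => h2.
    * by rewrite bin_small ?mul0r //; lia.
    * by rewrite /Af !Cz_neg ?mulr0 //; lia.
- rewrite cnt_rec // PoszD.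
  case: j hN => [|[|j]] hN.
  + have -> : (Posz 0 + 1 = Posz 1)%R by [].
    rewrite cnt_neg // add0r (IH 1 (N - 1)%R); last by lia.
    rewrite H0 H1 /= AfS.
    case: N hN => [k|k] hN; last by lia.
    case: k hN => [|M] hN; first by lia.
    have en : n = 3 * M + 2 by lia.
    by rewrite en Af_zero add0r.
  + have -> : (Posz 1 + 1 = Posz 2)%R by [].
    rewrite cnt_neg // add0r (IH 2 (N - 1)%R); last by lia.
    by rewrite HS (Hrec n 0 (N - 1)%R) subrK !H1 H0 addrC.
  + have e1 : (Posz j.+2 - 2 = Posz j)%R by lia.
    have e2 : (Posz j.+2 + 1 = Posz j.+3)%R by lia.
    rewrite e1 e2 (IH j (N + 1)%R); last by lia.
    rewrite (IH j.+3 (N - 1)%R); last by lia.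
    rewrite HS (Hrec n j.+1 (N - 1)%R) subrK (Hrec n j N); ring.
Qed.

Theorem mainTheorem2 (N i : nat) :
  Posz (num_rpt (3 * N + 2 * i) i) =
  (\sum_(0 <= k < (i %/ 2).+1)
     Posz 'C(i - k, k) *
     (Posz 'C(3 * N + 2 * i + 1, N + k)
      - 3 * (if (0 < N + k)%N then Posz 'C(3 * N + 2 * i, N + k - 1) else 0)))%R.
Proof.
have -> : num_rpt (3 * N + 2 * i) i = cnt (3 * N + 2 * i) (Posz i) by [].
rewrite (main_gen (N := Posz N)); last by lia.
rewrite /H (big_cat_nat _ (n := (i %/ 2).+1)) //=; last by lia.
have -> : (\sum_((i %/ 2).+1 <= k < i.+1)
    Posz 'C(i - k, k) * Af (3 * N + 2 * i) (Posz N + Posz k))%R = 0%R.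
  rewrite big_nat big1 // => k /andP [h1 h2]; rewrite bin_small ?mul0r //; lia.
rewrite addr0.
apply: eq_bigr => k _; congr (_ * _)%R.
rewrite /Af -PoszD addn1.
by case: (N + k).
Qed.
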